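(* Let $P=\operatorname{conv}(W(\Lambda))$ be a full-dimensional $W$-symmetric polytope, $K\subseteq S$, and let $F$ be a facet of $P$ whose barycenter lies in $C_K$. (1) The stabilizer $W_F$ of $F$ in $W_K$ is generated by the simple reflections $r_k$, $k\in K$, that fix the barycenter of $F$. (2) If $P$ is non-degenerate, then for every $s\in W_K$ the intersection $s(F)\cap F$ is either $F$ or empty.
   Context: $V$ is a real Euclidean space of dimension $n$, $R$ a reduced root system spanning $V$ with simple system $S=\{\alpha_1,\dots,\alpha_n\}$ identified with $\{1,\dots,n\}$; $r_i(x)=x-\frac{2\langle x,\alpha_i\rangle}{\langle\alpha_i,\alpha_i\rangle}\alpha_i$; $W$ generated by all $r_i$, $W_K$ by $r_k$, $k\in K$. $C_K=\{x:\langle x,\alpha_k\rangle\ge0\ \forall k\in K\}$; $\Lambda\subset C_S$ finite. $P$ is non-degenerate if no vertex of $P$ lies on the boundary of $C_S$. *)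

(* Defs.v *)
From mathcomp Require Import all_boot all_order all_algebra.
From mathcomp Require Import reals.
Set Implicit Arguments. Unset Strict Implicit. Unset Printing Implicit Defensive.
Import Order.TTheory GRing.Theory Num.Theory.
Local Open Scope ring_scope.

Section Defs.
Variables (R : realType) (n : nat).
Notation vec := 'rV[R]_n.

Definition dot (u v : vec) : R := (u *m v^T) 0 0.

Definition refl (a x : vec) : vec := x - (2 * dot x a / dot a a) *: a.

Definition root_system (Rt : seq vec) : Prop :=
  [/\ 0 \notin Rt,
      row_full (\matrix_(i < size Rt) nth 0 Rt i),
      (forall a x, a \in Rt -> x \in Rt -> refl a x \in Rt),
      (forall a x, a \in Rt -> x \in Rt ->
          exists z : int, 2 * dot x a / dot a a = z%:~R) &
      (forall a (c : R), a \in Rt -> c *: a \in Rt -> c = 1 \/ c = -1)].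

Definition simple_system (Rt : seq vec) (alpha : 'I_n -> vec) : Prop :=
  [/\ forall i, alpha i \in Rt,
      row_free (\matrix_(i < n) alpha i) &
      forall x, x \in Rt -> exists c : 'I_n -> R,
        x = \sum_(i < n) c i *: alpha i /\
        ((forall i, 0 <= c i) \/ (forall i, c i <= 0))].

Definition wact (alpha : 'I_n -> vec) (s : seq 'I_n) (x : vec) : vec :=
  foldr (fun i y => refl (alpha i) y) x s.

Definition inWK (alpha : 'I_n -> vec) (K : {set 'I_n}) (w : vec -> vec) : Prop :=
  exists s : seq 'I_n, all (fun i => i \in K) s /\ forall x, w x = wact alpha s x.

Definition inC (alpha : 'I_n -> vec) (K : {set 'I_n}) (x : vec) : Prop :=
  forall k, k \in K -> 0 <= dot x (alpha k).

Definition conv (A : vec -> Prop) (x : vec) : Prop :=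
  exists (m : nat) (c : 'I_m -> R) (p : 'I_m -> vec),
    [/\ forall i, 0 <= c i, \sum_(i < m) c i = 1, forall i, A (p i) &
        x = \sum_(i < m) c i *: p i].

Definition Worbit (alpha : 'I_n -> vec) (Lam : seq vec) (y : vec) : Prop :=
  exists (s : seq 'I_n) (l : vec), l \in Lam /\ y = wact alpha s l.

Definition Wpolytope (alpha : 'I_n -> vec) (Lam : seq vec) : vec -> Prop :=
  conv (Worbit alpha Lam).

Definition full_dim (P : vec -> Prop) : Prop :=
  forall (a : vec) (d : R), (forall x, P x -> dot a x = d) -> a = 0.

(* F is a facet of P: a nonempty face cut out by a supporting hyperplane
   {<a,x> = b}, whose affine hull is that hyperplane (dim F = n - 1) *)
Definition facet (P F : vec -> Prop) : Prop :=
  exists (a : vec) (b : R),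
    [/\ a != 0,
        forall x, P x -> dot a x <= b,
        forall x, F x <-> (P x /\ dot a x = b),
        exists x, F x &
        forall (c : vec) (d : R), (forall x, F x -> dot c x = d) ->
          exists t : R, c = t *: a /\ d = t * b].

Definition vertex (P : vec -> Prop) (v : vec) : Prop :=
  P v /\ forall x y (t : R), P x -> P y -> 0 < t -> t < 1 ->
    v = t *: x + (1 - t) *: y -> x = v /\ y = v.

Definition is_bary (F : vec -> Prop) (b : vec) : Prop :=
  exists s : seq vec, [/\ uniq s, forall v, v \in s <-> vertex F v &
    b = (size s)%:R^-1 *: \sum_(v <- s) v].

Definition img (w : vec -> vec) (F : vec -> Prop) (y : vec) : Prop :=
  exists x, F x /\ w x = y.

Definition stabilizes (w : vec -> vec) (F : vec -> Prop) : Prop :=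
  forall y, img w F y <-> F y.

Definition on_boundary (alpha : 'I_n -> vec) (x : vec) : Prop :=
  inC alpha setT x /\ exists i, dot x (alpha i) = 0.

Definition Wnondegenerate (alpha : 'I_n -> vec) (P : vec -> Prop) : Prop :=
  forall v, vertex P v -> ~ on_boundary alpha v.

End Defs.

(* Main.v *)
Require Import Defs.
From mathcomp Require Import all_boot all_order all_algebra.
From mathcomp Require Import reals.
From mathcomp Require Import ring lra.
From Stdlib Require Import Classical.
Set Implicit Arguments. Unset Strict Implicit. Unset Printing Implicit Defensive.
Import Order.TTheory GRing.Theory Num.Theory.
Local Open Scope ring_scope.


Section Basic.
Variables (R : realType) (n : nat).
Notation vec := 'rV[R]_n.
Implicit Types (u v w x y z a : vec).

Lemma dotE u v : dot u v = \sum_j u 0 j * v 0 j.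
Proof. by rewrite /dot mxE; apply: eq_bigr => j _; rewrite mxE. Qed.

Lemma dotC u v : dot u v = dot v u.
Proof. by rewrite !dotE; apply: eq_bigr => j _; rewrite mulrC. Qed.

Lemma dotDl u v w : dot (u + v) w = dot u w + dot v w.
Proof. by rewrite !dotE -big_split; apply: eq_bigr => j _; rewrite mxE mulrDl. Qed.

Lemma dotZl c u w : dot (c *: u) w = c * dot u w.
Proof. by rewrite !dotE mulr_sumr; apply: eq_bigr => j _; rewrite mxE mulrA. Qed.

Lemma dotNl u w : dot (- u) w = - dot u w.
Proof. by rewrite -scaleN1r dotZl mulN1r. Qed.

Lemma dotBl u v w : dot (u - v) w = dot u w - dot v w.
Proof. by rewrite dotDl dotNl. Qed.

Lemma dot0l w : dot 0 w = 0.
Proof. by rewrite -(scale0r (0:vec)) dotZl mul0r. Qed.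

Lemma dotDr u v w : dot w (u + v) = dot w u + dot w v.
Proof. by rewrite dotC dotDl !(dotC w). Qed.
Lemma dotZr c u w : dot w (c *: u) = c * dot w u.
Proof. by rewrite dotC dotZl dotC. Qed.
Lemma dotNr u w : dot w (- u) = - dot w u.
Proof. by rewrite dotC dotNl dotC. Qed.
Lemma dotBr u v w : dot w (u - v) = dot w u - dot w v.
Proof. by rewrite dotDr dotNr. Qed.
Lemma dot0r w : dot w 0 = 0.
Proof. by rewrite dotC dot0l. Qed.

Lemma dot_suml I (r : seq I) (P : pred I) (F : I -> vec) w :
  dot (\sum_(i <- r | P i) F i) w = \sum_(i <- r | P i) dot (F i) w.
Proof.
elim/big_rec2: _ => [|i y1 y2 _ <-]; first by rewrite dot0l.
by rewrite dotDl.
Qed.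

Lemma dot_sumr I (r : seq I) (P : pred I) (F : I -> vec) w :
  dot w (\sum_(i <- r | P i) F i) = \sum_(i <- r | P i) dot w (F i).
Proof. rewrite dotC dot_suml; apply: eq_bigr => i _; exact: dotC. Qed.

Lemma dot_ge0 u : 0 <= dot u u.
Proof. rewrite dotE; apply: sumr_ge0 => j _; by rewrite -expr2 sqr_ge0. Qed.

Lemma dot_eq0 u : (dot u u == 0) = (u == 0).
Proof.
apply/idP/idP; last by move/eqP->; rewrite dot0l.
rewrite dotE psumr_eq0; last by move=> j _; rewrite -expr2 sqr_ge0.
move/allP=> H; apply/eqP/rowP=> j; rewrite mxE.
by have := H j (mem_index_enum j); rewrite mulf_eq0 orbb => /eqP.
Qed.

Lemma dot_gt0 u : u != 0 -> 0 < dot u u.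
Proof. by move=> h; rewrite lt_def dot_eq0 h dot_ge0. Qed.

End Basic.


Section Refl.
Variables (R : realType) (n : nat).
Notation vec := 'rV[R]_n.
Implicit Types (u v w x y z a : vec).

Lemma reflD a x y : refl a (x + y) = refl a x + refl a y.
Proof. by rewrite /refl dotDl mulrDr mulrDl scalerDl opprD addrACA. Qed.

Lemma reflZ a c x : refl a (c *: x) = c *: refl a x.
Proof. rewrite /refl dotZl scalerBr scalerA; congr (_ - _ *: _); ring. Qed.

Lemma refl0 a : refl a 0 = 0.
Proof. by have := reflZ a 0 0; rewrite !scale0r. Qed.

Lemma reflN a x : refl a (- x) = - refl a x.
Proof. by rewrite -scaleN1r reflZ scaleN1r. Qed.

Lemma reflB a x y : refl a (x - y) = refl a x - refl a y.
Proof. by rewrite reflD reflN. Qed.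

Lemma dot_refl a x y : a != 0 -> dot (refl a x) (refl a y) = dot x y.
Proof.
move=> a0; have h := dot_gt0 a0.
rewrite /refl !(dotBl, dotBr, dotZl, dotZr) (dotC a y).
have d0 : dot a a != 0 by rewrite gt_eqF.
by field.
Qed.

Lemma refl_self a : a != 0 -> refl a a = - a.
Proof.
move=> a0; have h := dot_gt0 a0; have d0 : dot a a != 0 by rewrite gt_eqF.
rewrite /refl mulfK // -{1}(scale1r a) -scalerBl -scaleN1r; congr (_ *: _).
lra.
Qed.

Lemma reflK a x : a != 0 -> refl a (refl a x) = x.
Proof.
move=> a0; rewrite {2}/refl reflB reflZ refl_self // /refl scalerN opprK.
by rewrite subrK.
Qed.

Lemma refl_fix a x : a != 0 -> (refl a x == x) = (dot x a == 0).
Proof.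
move=> a0; have h := dot_gt0 a0; have d0 : dot a a != 0 by rewrite gt_eqF.
rewrite /refl -subr_eq0 addrAC subrr add0r oppr_eq0 scaler_eq0 (negbTE a0) orbF.
by rewrite !mulf_eq0 invr_eq0 (negbTE d0) orbF pnatr_eq0.
Qed.

Lemma refl_conj (f : vec -> vec) a x :
  (forall x y, f (x + y) = f x + f y) -> (forall c x, f (c *: x) = c *: f x) ->
  (forall x y, dot (f x) (f y) = dot x y) ->
  f (refl a x) = refl (f a) (f x).
Proof.
move=> fD fZ fd.
have fN : forall x, f (- x) = - f x by move=> z; rewrite -scaleN1r fZ scaleN1r.
by rewrite /refl fD fN fZ !fd.
Qed.

End Refl.


Section Roots.
Variables (R : realType) (n : nat) (Rt : seq 'rV[R]_n) (alpha : 'I_n -> 'rV[R]_n).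
Hypothesis HR : root_system Rt.
Hypothesis HS : simple_system Rt alpha.
Notation vec := 'rV[R]_n.
Implicit Types (u v w x y z a : vec) (s : seq 'I_n).
Notation wa := (wact alpha).

Lemma alpha_Rt i : alpha i \in Rt.
Proof. by case: HS. Qed.

Lemma alpha_neq0 i : alpha i != 0.
Proof. case: HR => h0 _ _ _ _; apply/eqP=> e; move: h0; by rewrite -e alpha_Rt. Qed.

Lemma wact_cons i s x : wa (i :: s) x = refl (alpha i) (wa s x).
Proof. by []. Qed.

Lemma wactD s x y : wa s (x + y) = wa s x + wa s y.
Proof. by elim: s => //= i s IH; rewrite IH reflD. Qed.
Lemma wactZ s c x : wa s (c *: x) = c *: wa s x.
Proof. by elim: s => //= i s IH; rewrite IH reflZ. Qed.
Lemma wact0 s : wa s 0 = 0.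
Proof. by have := wactZ s 0 0; rewrite !scale0r. Qed.
Lemma wactN s x : wa s (- x) = - wa s x.
Proof. by rewrite -scaleN1r wactZ scaleN1r. Qed.
Lemma wactB s x y : wa s (x - y) = wa s x - wa s y.
Proof. by rewrite wactD wactN. Qed.
Lemma wact_sum s I (r : seq I) (P : pred I) (F : I -> vec) :
  wa s (\sum_(i <- r | P i) F i) = \sum_(i <- r | P i) wa s (F i).
Proof.
elim/big_rec2: _ => [|i y1 y2 _ <-]; first by rewrite wact0.
by rewrite wactD.
Qed.
Lemma wact_dot s x y : dot (wa s x) (wa s y) = dot x y.
Proof. by elim: s => //= i s IH; rewrite dot_refl ?alpha_neq0. Qed.
Lemma wact_cat s1 s2 x : wa (s1 ++ s2) x = wa s1 (wa s2 x).
Proof. by rewrite /wact foldr_cat. Qed.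
Lemma wact_rcons s i x : wa (rcons s i) x = wa s (refl (alpha i) x).
Proof. by rewrite -cats1 wact_cat. Qed.
Lemma wact_revK s x : wa (rev s) (wa s x) = x.
Proof.
elim: s x => //= i s IH x; rewrite rev_cons wact_rcons reflK ?alpha_neq0 //.
Qed.
Lemma wact_Krev s x : wa s (wa (rev s) x) = x.
Proof. by have := wact_revK (rev s) x; rewrite revK. Qed.
Lemma wact_adj s x y : dot (wa s x) y = dot x (wa (rev s) y).
Proof. by rewrite -{1}(wact_Krev s y) wact_dot. Qed.
Lemma wact_inj s x y : wa s x = wa s y -> x = y.
Proof. by move=> e; rewrite -(wact_revK s x) e wact_revK. Qed.

Lemma wact_Rt s x : x \in Rt -> wa s x \in Rt.
Proof.
case: HR => _ _ hr _ _.
by elim: s => //= i s IH xR; apply: hr; [exact: alpha_Rt | exact: IH].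
Qed.

Lemma wact_refl s a x : wa s (refl a x) = refl (wa s a) (wa s x).
Proof. apply: refl_conj; [exact: wactD | exact: wactZ | exact: wact_dot]. Qed.

Lemma wact_eq_refl s i x : wa s (alpha i) = alpha i ->
  wa s (refl (alpha i) x) = refl (alpha i) (wa s x).
Proof. by move=> e; rewrite wact_refl e. Qed.

Definition Amx : 'M[R]_n := \matrix_(i < n) alpha i.
Lemma Amx_unit : Amx \in unitmx.
Proof. by case: HS => _ h _; rewrite -row_free_unit. Qed.

Definition crd x i := (x *m invmx Amx) 0 i.

Lemma mulA_sum (u : 'rV[R]_n) : u *m Amx = \sum_i u 0 i *: alpha i.
Proof. by rewrite mulmx_sum_row; apply: eq_bigr => i _; rewrite rowK. Qed.

Lemma coord_expand x : x = \sum_i crd x i *: alpha i.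
Proof. by rewrite -mulA_sum mulmxKV // Amx_unit. Qed.

Lemma coord_uniq (c : 'I_n -> R) x : x = \sum_i c i *: alpha i -> forall i, c i = crd x i.
Proof.
move=> ->; have -> : \sum_i c i *: alpha i = (\row_j c j) *m Amx.
  by rewrite mulA_sum; apply: eq_bigr => i _; rewrite mxE.
by move=> i; rewrite /crd mulmxK ?Amx_unit // mxE.
Qed.

Lemma coordD x y i : crd (x + y) i = crd x i + crd y i.
Proof. by rewrite /crd mulmxDl mxE. Qed.
Lemma coordZ c x i : crd (c *: x) i = c * crd x i.
Proof. by rewrite /crd -scalemxAl mxE. Qed.
Lemma coordN x i : crd (- x) i = - crd x i.
Proof. by rewrite -scaleN1r coordZ mulN1r. Qed.
Lemma coordB x y i : crd (x - y) i = crd x i - crd y i.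
Proof. by rewrite coordD coordN. Qed.
Lemma coord_alpha k i : crd (alpha k) i = (k == i)%:R.
Proof.
have := coord_uniq (c := fun j => (k == j)%:R) (x := alpha k).
move=> h; rewrite -h //.
rewrite (bigD1 k) //= eqxx scale1r big1 ?addr0 // => j /negbTE; rewrite eq_sym => ->.
by rewrite scale0r.
Qed.
Lemma coord0 i : crd 0 i = 0.
Proof. by rewrite /crd mul0mx mxE. Qed.

Lemma coord_eq0 x : (forall i, crd x i = 0) -> x = 0.
Proof.
move=> h; rewrite (coord_expand x) big1 // => i _; by rewrite h scale0r.
Qed.

Lemma dot_coord y x : dot y x = \sum_i crd x i * dot y (alpha i).
Proof.
by rewrite {1}(coord_expand x) dot_sumr; apply: eq_bigr => i _; rewrite dotZr.
Qed.

Definition pos x := forall i, 0 <= crd x i.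
Definition neg x := forall i, crd x i <= 0.

Lemma root_sign x : x \in Rt -> pos x \/ neg x.
Proof.
case: HS => _ _ h xR; have [c [ex [hc|hc]]] := h x xR.
- by left => i; rewrite -(coord_uniq ex).
- by right => i; rewrite -(coord_uniq ex).
Qed.

Lemma root_neq0 x : x \in Rt -> x != 0.
Proof. case: HR => h0 _ _ _ _ xR; apply/eqP=> e; by move: h0; rewrite -e xR. Qed.

Lemma pos_alpha k : pos (alpha k).
Proof. by move=> i; rewrite coord_alpha ler0n. Qed.

Lemma coord_refl k x j : j != k -> crd (refl (alpha k) x) j = crd x j.
Proof.
move=> jk; rewrite /refl coordB coordZ coord_alpha eq_sym (negbTE jk) mulr0 subr0 //.
Qed.

Lemma neg1 i x : x \in Rt -> pos x -> ~ pos (refl (alpha i) x) -> x = alpha i.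
Proof.
move=> xR px npx.
have rR : refl (alpha i) x \in Rt by case: HR => _ _ hr _ _; apply: hr => //; exact: alpha_Rt.
have z : forall j, j != i -> crd x j = 0.
  move=> j ji; apply/eqP; rewrite eq_le (px j) andbT leNgt; apply/negP => cj.
  case: (root_sign rR) => // hn; move: (hn j); rewrite coord_refl //.
  by rewrite leNgt cj.
have ex : x = crd x i *: alpha i.
  rewrite {1}(coord_expand x) (bigD1 i) //= big1 ?addr0 // => j ji.
  by rewrite z // scale0r.
case: HR => _ _ _ _ hred.
have := hred (alpha i) (crd x i) (alpha_Rt i); rewrite -ex => /(_ xR) [e|e].
  by rewrite ex e scale1r.
by move: (px i); rewrite e ler0N1.
Qed.

Lemma coord_wact_out (K : {set 'I_n}) s x j :
  all (fun i => i \in K) s -> j \notin K -> crd (wa s x) j = crd x j.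
Proof.
elim: s => //= i s IH /andP [iK sK] jK.
rewrite coord_refl ?IH //; apply/eqP => e; by move: jK; rewrite e iK.
Qed.

End Roots.


Section Coxeter.
Variables (R : realType) (n : nat) (Rt : seq 'rV[R]_n) (alpha : 'I_n -> 'rV[R]_n).
Hypothesis HR : root_system Rt.
Hypothesis HS : simple_system Rt alpha.
Notation vec := 'rV[R]_n.
Implicit Types (x y z a : vec).
Notation wa := (wact alpha).
Notation crd := (crd alpha).
Notation pos := (pos alpha).

Lemma deletion (u : seq 'I_n) k : ~ pos (wa u (alpha k)) ->
  exists u', [/\ (size u' < size u)%N, {subset u' <= u} &
                forall x, wa u (refl (alpha k) x) = wa u' x].
Proof.
elim: u => [|i u1 IH] h; first by exfalso; apply: h; exact: (pos_alpha HS).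
have gR : wa u1 (alpha k) \in Rt by apply: (wact_Rt HR HS); exact: alpha_Rt.
case: (classic (pos (wa u1 (alpha k)))) => hp.
- have e := neg1 HR HS gR hp h.
  exists u1; split => //; first by move=> j ju; rewrite inE ju orbT.
  move=> x; rewrite wact_cons (wact_refl HR HS) e reflK //; exact: (alpha_neq0 HR HS).
- have [u' [s1 s2 s3]] := IH hp.
  exists (i :: u'); split => //=.
    by move=> j; rewrite !inE => /orP [->//|/s2 ->]; rewrite orbT.
  by move=> x; rewrite s3.
Qed.

Lemma wact_inv_eq (w v : seq 'I_n) :
  (forall x, wa (rev w) x = wa v x) -> forall x, wa w x = wa (rev v) x.
Proof.
move=> h x; by rewrite -{2}(wact_revK HR HS w x) h (wact_revK HR HS).
Qed.

Variable K : {set 'I_n}.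
Definition Kword (s : seq 'I_n) := all (fun i => i \in K) s.

Lemma dot_K_ge0 z g : (forall i, i \in K -> 0 <= dot z (alpha i)) ->
  pos g -> (forall i, i \notin K -> crd g i = 0) -> 0 <= dot z g.
Proof.
move=> hz pg hK; rewrite (dot_coord HS); apply: sumr_ge0 => i _.
case: (boolP (i \in K)) => iK; first by apply: mulr_ge0 => //; apply: hz.
by rewrite hK // mul0r.
Qed.

Lemma dot_K_gt0 z g : (forall i, i \in K -> 0 < dot z (alpha i)) ->
  pos g -> g != 0 -> (forall i, i \notin K -> crd g i = 0) -> 0 < dot z g.
Proof.
move=> hz pg g0 hK.
have [j cj] : exists j, crd g j != 0.
  apply: NNPP => hn; move/eqP: g0; apply; apply: (coord_eq0 HS) => i.
  by apply/eqP; apply: negbNE; apply/negP => hi; apply: hn; exists i.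
have jK : j \in K by apply: contraT => jK; move: cj; rewrite hK // eqxx.
rewrite (dot_coord HS) (bigD1 j) //=.
apply: ltr_pwDl.
  by apply: mulr_gt0; [rewrite lt_def cj pg | apply: hz].
apply: sumr_ge0 => i _.
case: (boolP (i \in K)) => iK; first by apply: mulr_ge0 => //; apply/ltW/hz.
by rewrite hK // mul0r.
Qed.

Lemma size_ind (P : seq 'I_n -> Prop) :
  (forall w, (forall w', (size w' < size w)%N -> P w') -> P w) -> forall w, P w.
Proof.
move=> h w; have : (size w < (size w).+1)%N by [].
move: {2}(size w).+1 => N; elim: N w => // N IH w hw; apply: h => w' hw'.
apply: IH; exact: leq_trans hw' hw.
Qed.

Lemma Kword_rev s : Kword (rev s) = Kword s.
Proof. by rewrite /Kword all_rev. Qed.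

Lemma Kword_sub s s' : {subset s' <= s} -> Kword s -> Kword s'.
Proof. move=> sub /allP h; apply/allP => i /sub; exact: h. Qed.

Lemma stab_lemma b : (forall k, k \in K -> 0 <= dot b (alpha k)) ->
  forall w, Kword w -> wa w b = b ->
  exists w', all (fun i => i \in [set k in K | refl (alpha k) b == b]) w' /\
             forall x, wa w x = wa w' x.
Proof.
move=> hb; elim/size_ind => -[|k w1] IH hw hfix; first by exists [::].
move: hw => /= /andP [kK hw1].
case: (classic (pos (wa (rev w1) (alpha k)))) => hp.
- have gR : wa (rev w1) (alpha k) \in Rt by apply: (wact_Rt HR HS); exact: alpha_Rt.
  have hout : forall i, i \notin K -> crd (wa (rev w1) (alpha k)) i = 0.
    move=> i iK; rewrite (coord_wact_out HS (K:=K)) //; last by rewrite all_rev.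
    rewrite (coord_alpha HS).
    by case: eqP => // e; move: iK; rewrite -e kK.
  have d1 : 0 <= dot b (wa (rev w1) (alpha k)) by apply: dot_K_ge0.
  have d2 : dot b (wa (rev (k :: w1)) (alpha k)) = dot b (alpha k).
    by rewrite -(wact_adj HR HS) hfix.
  move: d2; rewrite rev_cons (wact_rcons alpha) refl_self ?(alpha_neq0 HR HS) //.
  rewrite (wactN alpha) dotNr => d2.
  have d0 : dot b (alpha k) = 0 by apply/eqP; rewrite eq_le hb // andbT -d2 oppr_le0.
  have fk : refl (alpha k) b = b by apply/eqP; rewrite refl_fix ?(alpha_neq0 HR HS) // d0.
  have hw1b : wa w1 b = b.
    by move: hfix; rewrite wact_cons => e; rewrite -(reflK (wa w1 b) (alpha_neq0 HR HS k)) e fk.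
  have [w' [h1 h2]] := IH w1 (ltnSn _) hw1 hw1b.
  exists (k :: w'); split; first by rewrite /= inE kK fk eqxx h1.
  by move=> x; rewrite !wact_cons h2.
- have [u' [s1 s2 s3]] := deletion hp.
  have e : forall x, wa (rev (k :: w1)) x = wa u' x.
    by move=> x; rewrite rev_cons (wact_rcons alpha) s3.
  have e2 := wact_inv_eq e.
  have hu : Kword (rev u').
    rewrite Kword_rev; apply: (Kword_sub s2); by rewrite Kword_rev.
  have sz : (size (rev u') < size (k :: w1))%N by rewrite size_rev (leq_trans s1) // size_rev.
  have hb' : wa (rev u') b = b by rewrite -e2.
  have [w' [h1 h2]] := IH _ sz hu hb'.
  by exists w'; split => // x; rewrite -h2; exact: e2.
Qed.

Lemma sup_lemma a z : (forall k, k \in K -> 0 <= dot a (alpha k)) ->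
  (forall k, k \in K -> 0 < dot z (alpha k)) ->
  forall w, Kword w -> 0 <= dot a (z - wa w z) /\
                       (dot a (z - wa w z) = 0 -> wa w a = a).
Proof.
move=> ha hz; elim/size_ind => -[|k w1] IH hw.
  by rewrite /= subrr dot0r.
move: (hw) => /= /andP [kK hw1].
case: (classic (pos (wa (rev w1) (alpha k)))) => hp.
- have gR : wa (rev w1) (alpha k) \in Rt by apply: (wact_Rt HR HS); exact: alpha_Rt.
  have hout : forall i, i \notin K -> crd (wa (rev w1) (alpha k)) i = 0.
    move=> i iK; rewrite (coord_wact_out HS (K:=K)) //; last by rewrite all_rev.
    rewrite (coord_alpha HS).
    by case: eqP => // e; move: iK; rewrite -e kK.
  have d1 : 0 < dot z (wa (rev w1) (alpha k)).
    by apply: dot_K_gt0 => //; apply: (root_neq0 HR).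
  rewrite -(wact_Krev HR HS w1 (alpha k)) -(wact_adj HR HS) in d1.
  rewrite (wact_Krev HR HS) in d1.
  have [IH1 IH2] := IH w1 (ltnSn _) hw1.
  have dk := ha k kK.
  have an := alpha_neq0 HR HS k.
  have pa := dot_gt0 an.
  set c := 2 * dot (wa w1 z) (alpha k) / dot (alpha k) (alpha k).
  have cp : 0 < c by rewrite /c; apply: divr_gt0 => //; apply: mulr_gt0.
  have E : z - wa (k :: w1) z = (z - wa w1 z) + c *: alpha k.
    by rewrite wact_cons /refl -/c opprD opprK addrA.
  rewrite E dotDr dotZr.
  split; first by apply: addr_ge0 => //; apply: mulr_ge0 => //; apply: ltW.
  move=> h0.
  have h1 : dot a (z - wa w1 z) = 0.
    apply/eqP; rewrite eq_le IH1 andbT -h0 lerDl; apply: mulr_ge0 => //; exact: ltW.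
  have h2 : dot a (alpha k) = 0.
    move: h0; rewrite h1 add0r => /eqP; rewrite mulf_eq0 (gt_eqF cp) /= => /eqP.
    by rewrite dotC.
  rewrite /= IH2 //; apply/eqP; rewrite refl_fix //; by apply/eqP.
- have [u' [s1 s2 s3]] := deletion hp.
  have e : forall x, wa (rev (k :: w1)) x = wa u' x.
    by move=> x; rewrite rev_cons (wact_rcons alpha) s3.
  have e2 := wact_inv_eq e.
  have hu : Kword (rev u').
    rewrite Kword_rev; apply: (Kword_sub s2); by rewrite Kword_rev.
  have sz : (size (rev u') < size (k :: w1))%N by rewrite size_rev (leq_trans s1) // size_rev.
  have E1 := e2 z; have E2 := e2 a; simpl in E1, E2 |- *; rewrite E1 E2; exact: IH.
Qed.

End Coxeter.


Section Convex.
Variables (R : realType) (n : nat).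
Notation vec := 'rV[R]_n.
Implicit Types (x y z a p r : vec) (A B : vec -> Prop).

Definition wc A (mu : R) r : Prop := exists l : seq (R * vec),
  [/\ all (fun q => 0 <= q.1) l, \sum_(q <- l) q.1 = mu,
      (forall q, q \in l -> q.1 != 0 -> A q.2) & r = \sum_(q <- l) q.1 *: q.2].

Lemma wc_nil A : wc A 0 0.
Proof. by exists [::]; rewrite !big_nil. Qed.

Lemma wc_cons A c p mu r : 0 <= c -> (c != 0 -> A p) -> wc A mu r ->
  wc A (c + mu) (c *: p + r).
Proof.
move=> c0 hp [l [h1 h2 h3 h4]]; exists ((c, p) :: l); split.
- by rewrite /= c0.
- by rewrite big_cons h2.
- by move=> q; rewrite inE => /orP [/eqP -> /= /hp|/h3].
- by rewrite big_cons h4.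
Qed.

Lemma wc_elim A (P : R -> vec -> Prop) :
  P 0 0 ->
  (forall c p mu r, 0 <= c -> (c != 0 -> A p) -> wc A mu r -> P mu r ->
     P (c + mu) (c *: p + r)) ->
  forall mu r, wc A mu r -> P mu r.
Proof.
move=> h0 hc mu r [l [h1 h2 h3 h4]]; subst mu r.
elim: l h1 h3 => [|[c p] l IH] /=; first by rewrite !big_nil.
move=> /andP [c0 hl] h3; rewrite !big_cons /=.
have h3' : forall q, q \in l -> q.1 != 0 -> A q.2.
  by move=> q ql; apply: h3; rewrite inE ql orbT.
apply: (hc c p (\sum_(q <- l) q.1) (\sum_(q <- l) q.1 *: q.2)) => //.
- by move=> cn; apply: (h3 (c, p)) => //; rewrite inE eqxx.
- by exists l; split.
- exact: IH.
Qed.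

Lemma wc_add A m1 m2 r1 r2 : wc A m1 r1 -> wc A m2 r2 -> wc A (m1 + m2) (r1 + r2).
Proof.
move=> [l1 [a1 b1 c1 d1]] [l2 [a2 b2 c2 d2]]; exists (l1 ++ l2); split.
- by rewrite all_cat a1 a2.
- by rewrite big_cat b1 b2.
- by move=> q; rewrite mem_cat => /orP [/c1|/c2].
- by rewrite big_cat d1 d2.
Qed.

Lemma wc_scale A t mu r : 0 <= t -> wc A mu r -> wc A (t * mu) (t *: r).
Proof.
move=> t0; move: mu r; apply: (wc_elim (P := fun mu r => wc A (t * mu) (t *: r))); first by rewrite mulr0 scaler0; apply: wc_nil.
move=> c p m r' c0 hp _ IH; rewrite mulrDr scalerDr scalerA.
apply: wc_cons => //; first exact: mulr_ge0.
by move=> h; apply: hp; apply: contraNneq h => ->; rewrite mulr0.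
Qed.

Lemma wc_ge0 A mu r : wc A mu r -> 0 <= mu.
Proof.
by move: mu r; apply: (wc_elim (P := fun mu r => 0 <= mu)) => // c p m r c0 _ _ h; apply: addr_ge0.
Qed.

Lemma wc_mono A B mu r : (forall y, A y -> B y) -> wc A mu r -> wc B mu r.
Proof.
move=> hAB; move: mu r; apply: (wc_elim (P := fun mu r => wc B mu r)); first exact: wc_nil.
move=> c p m r c0 hp _ h; apply: wc_cons => // /hp; exact: hAB.
Qed.

Lemma wc_zero A r : wc A 0 r -> r = 0.
Proof.
have : forall mu r, wc A mu r -> mu = 0 -> r = 0; last by move=> h /h ->.
apply: (wc_elim (P := fun mu r => mu = 0 -> r = 0)) => // c p m r' c0 _ hw IH e.
have m0 := wc_ge0 hw.
have c00 : c = 0 by apply/eqP; rewrite eq_le c0 andbT -e lerDl.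
move: e; rewrite c00 add0r => /IH ->; by rewrite scale0r addr0.
Qed.

Lemma wc_single A c p : 0 <= c -> A p -> wc A c (c *: p).
Proof.
move=> c0 hp; have := wc_cons c0 (fun _ => hp) (wc_nil A).
by rewrite !addr0.
Qed.

Lemma wc_exists A mu r : wc A mu r -> 0 < mu -> exists y, A y.
Proof.
move: mu r; apply: (wc_elim (P := fun mu r => 0 < mu -> exists y, A y)); first by rewrite ltxx.
move=> c p m r c0 hp hw IH h.
case: (eqVneq c 0) => [c00|cn]; last by exists p; apply: hp.
by apply: IH; move: h; rewrite c00 add0r.
Qed.

Lemma wc_trans A B mu r : (forall y, A y -> wc B 1 y) -> wc A mu r -> wc B mu r.
Proof.
move=> hAB; move: mu r; apply: (wc_elim (P := fun mu r => wc B mu r)); first exact: wc_nil.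
move=> c p m r c0 hp _ h; apply: wc_add => //.
case: (eqVneq c 0) => [->|cn]; first by rewrite scale0r; apply: wc_nil.
by have := wc_scale c0 (hAB _ (hp cn)); rewrite mulr1.
Qed.

Lemma wc_map A B (f : vec -> vec) mu r :
  (forall x y, f (x + y) = f x + f y) -> (forall c x, f (c *: x) = c *: f x) ->
  (forall y, A y -> B (f y)) -> wc A mu r -> wc B mu (f r).
Proof.
move=> fD fZ hAB; move: mu r; apply: (wc_elim (P := fun mu r => wc B mu (f r))).
  by have := fZ 0 0; rewrite !scale0r => ->; apply: wc_nil.
move=> c p m r c0 hp _ h; rewrite fD fZ; apply: wc_cons => // /hp; exact: hAB.
Qed.

Lemma wc_dot_le A g (be : R) mu r : (forall y, A y -> dot g y <= be) ->
  wc A mu r -> dot g r <= mu * be.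
Proof.
move=> hA; move: mu r; apply: (wc_elim (P := fun mu r => dot g r <= mu * be)); first by rewrite dot0r mul0r.
move=> c p m r c0 hp _ h; rewrite dotDr dotZr mulrDl lerD //.
case: (eqVneq c 0) => [->|cn]; first by rewrite !mul0r.
by rewrite ler_wpM2l // hA //; apply: hp.
Qed.

Lemma wc_dot_eq A g (be : R) mu r : (forall y, A y -> dot g y <= be) ->
  wc A mu r -> dot g r = mu * be -> wc (fun y => A y /\ dot g y = be) mu r.
Proof.
move=> hA; move: mu r; apply: (wc_elim (P := fun mu r => dot g r = mu * be -> wc (fun y => A y /\ dot g y = be) mu r)); first by move=> _; apply: wc_nil.
move=> c p m r c0 hp hw IH.
rewrite dotDr dotZr mulrDl => e.
have l1 : c * dot g p <= c * be.
  case: (eqVneq c 0) => [->|cn]; first by rewrite !mul0r.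
  by rewrite ler_wpM2l // hA //; apply: hp.
have l2 := wc_dot_le hA hw.
have e1 : c * dot g p = c * be by apply/eqP; rewrite eq_le l1 /=; lra.
have e2 : dot g r = m * be by lra.
apply: wc_cons => //; last exact: IH.
move=> cn; split; first exact: hp.
by apply: (mulfI cn).
Qed.

Lemma wc_dot_const A g (be : R) mu r : (forall y, A y -> dot g y = be) ->
  wc A mu r -> dot g r = mu * be.
Proof.
move=> hA; move: mu r; apply: (wc_elim (P := fun mu r => dot g r = mu * be)); first by rewrite dot0r mul0r.
move=> c p m r c0 hp _ h; rewrite dotDr dotZr mulrDl h.
case: (eqVneq c 0) => [->|cn]; first by rewrite !mul0r.
by rewrite hA //; apply: hp.
Qed.

Lemma wc_split A p mu x : wc A mu x -> exists (la : R) r,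
  [/\ 0 <= la, (la != 0 -> A p), wc (fun y => A y /\ y <> p) (mu - la) r &
      x = la *: p + r].
Proof.
move: mu x; apply: (wc_elim (P := fun mu x => exists (la : R) r,
  [/\ 0 <= la, (la != 0 -> A p), wc (fun y => A y /\ y <> p) (mu - la) r &
      x = la *: p + r])).
  by exists 0, 0; split => //; [rewrite eqxx | rewrite subr0; apply: wc_nil | rewrite scale0r addr0].
move=> c q m r c0 hq hw [la [r' [l0 hl hr e]]].
case: (eqVneq q p) => [qp|qp].
- exists (c + la), r'; split.
  + exact: addr_ge0.
  + move=> h; case: (eqVneq c 0) => [c00|cn]; last by rewrite -qp; apply: hq.
    by apply: hl; move: h; rewrite c00 add0r.
  + by have -> : c + m - (c + la) = m - la by ring.
  + by rewrite e scalerDl qp addrA.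
- exists la, (c *: q + r'); split => //.
  + have -> : c + m - la = c + (m - la) by ring.
    apply: wc_cons => // cn; split; [exact: hq | exact/eqP].
  + by rewrite e addrCA.
Qed.

Lemma conv_wc A x : conv A x <-> wc A 1 x.
Proof.
split.
- move=> [m [c [p [h1 h2 h3 h4]]]].
  exists [seq (c i, p i) | i <- index_enum 'I_m]; split.
  + by apply/allP => q /mapP [i _ ->] /=; apply: h1.
  + by rewrite big_map.
  + by move=> q /mapP [i _ ->] _; apply: h3.
  + by rewrite big_map h4.
- move=> hw; have [y0 Ay0] := wc_exists hw ltr01.
  move: hw => [l [h1 h2 h3 h4]].
  set x0 : R * vec := (0, 0).
  exists (size l), (fun i : 'I_(size l) => (nth x0 l i).1),
     (fun i : 'I_(size l) => if (nth x0 l i).1 != 0 then (nth x0 l i).2 else y0).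
  split.
  + by move=> i; apply: (allP h1); apply: mem_nth.
  + by rewrite -h2 (big_nth x0) big_mkord.
  + move=> i /=; case: ifP => // h; apply: h3 => //; exact: mem_nth.
  + rewrite h4 (big_nth x0) big_mkord; apply: eq_bigr => i _.
    by case: ifP => // /negbFE/eqP ->; rewrite !scale0r.
Qed.

Definition convexP (P : vec -> Prop) :=
  forall mu r, wc P mu r -> 0 < mu -> P (mu^-1 *: r).

Lemma convex_wc A : convexP (wc A 1).
Proof.
move=> mu r hw m0; have h := wc_trans (fun y h => h) hw.
have mi : 0 <= mu^-1 by rewrite invr_ge0 ltW.
have := wc_scale mi h; by rewrite mulVf ?gt_eqF.
Qed.

Lemma vertex_ext P Q v : (forall x, P x <-> Q x) -> vertex P v -> vertex Q v.
Proof.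
move=> e [Pv hv]; split; first by apply/e.
move=> x y t Qx Qy t0 t1 ev; apply: (hv x y t) => //; by apply/e.
Qed.

Lemma vertex_wc P A v mu r : vertex P v -> (forall y, A y -> P y) -> convexP P ->
  wc A mu r -> r = mu *: v -> wc (fun y => A y /\ y = v) mu r.
Proof.
move=> [Pv hv] hAP cP; move: mu r; apply: (wc_elim (P := fun mu r => r = mu *: v -> wc (fun y => A y /\ y = v) mu r)); first by move=> _; exact: wc_nil.
move=> c p m r c0 hp hw IH e.
have m0 := wc_ge0 hw.
case: (eqVneq c 0) => [c00|cn].
  apply: wc_cons => //; first by rewrite c00 eqxx.
  by apply: IH; move: e; rewrite c00 scale0r !add0r.
have cp : 0 < c by rewrite lt_def cn c0.
case: (eqVneq m 0) => [m00|mn].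
  have r0 : r = 0 by apply: (wc_zero (A:=A)); rewrite -m00.
  have e' : c *: p = c *: v by move: e; rewrite r0 m00 !addr0.
  have pv : p = v by apply: (scalerI cn).
  apply: wc_cons => //; first by move=> _; split; [exact: hp | exact: pv].
  by apply: IH; rewrite r0 m00 scale0r.
have mp : 0 < m by rewrite lt_def mn m0.
have Pr : P (m^-1 *: r) by apply: cP => //; exact: wc_mono hAP hw.
have Pp : P p by apply: hAP; apply: hp.
set t := c / (c + m).
have cm : 0 < c + m by apply: addr_gt0.
have t0 : 0 < t by apply: divr_gt0.
have t1 : t < 1 by rewrite /t ltr_pdivrMr // mul1r ltrDl.
have ev : v = t *: p + (1 - t) *: (m^-1 *: r).
  have cm0 : c + m != 0 by rewrite gt_eqF.
  have mn0 : m != 0 by rewrite gt_eqF.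
  apply: (scalerI cm0); rewrite -e scalerDr !scalerA.
  have -> : (c + m) * t = c by rewrite /t; field.
  have -> : (c + m) * (1 - t) / m = 1 by rewrite /t; field; rewrite mn0 cm0.
  by rewrite scale1r.
have [pv rv] := hv p (m^-1 *: r) t Pp Pr t0 t1 ev.
apply: wc_cons => //; first by move=> _; split; [exact: hp | exact: pv].
apply: IH; rewrite -rv scalerA mulfV ?scale1r //.
Qed.

Lemma vertex_in A v : vertex (wc A 1) v -> wc A 1 v -> A v.
Proof.
move=> hv hw.
have h := vertex_wc hv (fun y h => eq_ind _ _ (wc_single ler01 h) _ (scale1r y)) (@convex_wc A) hw.
have [y [Ay <-]] := wc_exists (h (esym (scale1r v))) ltr01.
exact: Ay.
Qed.

End Convex.


Section KM.
Variables (R : realType) (n : nat).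
Notation vec := 'rV[R]_n.
Implicit Types (x y z a p r : vec) (A B : vec -> Prop) (T : seq vec).

Definition PT T := wc (fun y => y \in T) 1.

Lemma notvertex T p : p \in T ->
  ~ wc (fun y => y \in [seq q <- T | q != p]) 1 p -> vertex (PT T) p.
Proof.
move=> pT hn; split; first by have := wc_single (A := fun y => y \in T) ler01 pT; rewrite scale1r.
move=> x y t Px Py t0 t1 e.
set B := fun y => y \in [seq q <- T | q != p].
have hB : forall z, z \in T /\ z <> p -> B z.
  by move=> z [zT zp]; rewrite /B mem_filter zT andbT; apply/eqP.
have [lx [rx [lx0 _ hx ex]]] := wc_split p Px.
have [ly [ry [ly0 _ hy ey]]] := wc_split p Py.
have hx' := wc_mono hB hx; have hy' := wc_mono hB hy.
have gx := wc_ge0 hx; have gy := wc_ge0 hy.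
have tx : 0 <= t * (1 - lx) by apply: mulr_ge0 => //; apply: ltW.
have ty : 0 <= (1 - t) * (1 - ly) by apply: mulr_ge0 => //; rewrite subr_ge0 ltW.
have t0' : 0 <= t by apply: ltW.
have t1' : 0 <= 1 - t by rewrite subr_ge0 ltW.
have hr := wc_add (wc_scale t0' hx') (wc_scale t1' hy').
set La := t * lx + (1 - t) * ly.
have eL : t * (1 - lx) + (1 - t) * (1 - ly) = 1 - La by rewrite /La; ring.
rewrite eL in hr.
have ep0 : t *: x + (1 - t) *: y = La *: p + (t *: rx + (1 - t) *: ry).
  rewrite ex ey /La !scalerDr !scalerA [(t * lx + _) *: p]scalerDl.
  by rewrite addrACA.
have ep : p = La *: p + (t *: rx + (1 - t) *: ry) by rewrite -ep0.
case: (ltrP La 1) => hL.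
  exfalso; apply: hn.
  have h1 : 0 < 1 - La by rewrite subr_gt0.
  have h2 : 0 <= (1 - La)^-1 by rewrite invr_ge0 ltW.
  have := wc_scale h2 hr; rewrite mulVf ?gt_eqF //.
  have -> : (1 - La)^-1 *: (t *: rx + (1 - t) *: ry) = p.
    have h1n : 1 - La != 0 by rewrite gt_eqF.
    apply: (scalerI h1n); rewrite scalerA mulfV ?gt_eqF // scale1r.
    by rewrite [(1 - La) *: p]scalerBl scale1r {1}ep addrAC subrr add0r.
  by [].
have a1 : t * (1 - lx) = 0 by lra.
have a2 : (1 - t) * (1 - ly) = 0 by lra.
have tn : t != 0 by rewrite gt_eqF.
have tn' : 1 - t != 0 by rewrite subr_eq0 eq_sym lt_eqF.
move: a1 a2 => /eqP; rewrite mulf_eq0 (negbTE tn) /= => /eqP a1 /eqP.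
rewrite mulf_eq0 (negbTE tn') /= => /eqP a2.
rewrite a1 in hx; rewrite a2 in hy.
have rx0 := wc_zero hx; have ry0 := wc_zero hy.
have elx : lx = 1 by lra.
have ely : ly = 1 by lra.
by rewrite ex ey rx0 ry0 elx ely scale1r !addr0.
Qed.

Lemma size_ind_T (P : seq vec -> Prop) :
  (forall T, (forall T', (size T' < size T)%N -> P T') -> P T) -> forall T, P T.
Proof.
move=> h T; have : (size T < (size T).+1)%N by [].
move: {2}(size T).+1 => N; elim: N T => // N IH T hw; apply: h => T' hT'.
apply: IH; exact: leq_trans hT' hw.
Qed.

Lemma PT_ext T T' : (forall y, y \in T -> PT T' y) -> (forall y, y \in T' -> y \in T) ->
  forall x, PT T x <-> PT T' x.
Proof.
move=> h1 h2 x; split => hx.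
- exact: wc_trans h1 hx.
- exact: wc_mono h2 hx.
Qed.

Lemma krein_milman T x : PT T x -> wc (vertex (PT T)) 1 x.
Proof.
move: T x; elim/size_ind_T => T IH x hx.
case: (classic (forall p, p \in T -> vertex (PT T) p)) => hall.
  exact: wc_mono hall hx.
have [p hp] := not_all_ex_not _ _ hall.
have [pT npv] := imply_to_and _ _ hp.
set T' := [seq q <- T | q != p].
have hw : PT T' p by apply: NNPP => hn; apply: npv; apply: notvertex.
have e : forall y, PT T y <-> PT T' y.
  apply: PT_ext.
    move=> y yT; case: (eqVneq y p) => [->//|yp].
    have yT' : y \in T' by rewrite mem_filter yp.
    by have := wc_single (A := fun y => y \in T') ler01 yT'; rewrite scale1r.
  by move=> y; rewrite mem_filter => /andP [].
have sz : (size T' < size T)%N.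
  rewrite size_filter -(count_predC (pred1 p) T) -{1}(add0n (count _ T)) ltn_add2r.
  by rewrite -has_count has_pred1.
have h := IH T' sz x (proj1 (e x) hx).
apply: wc_mono h => v hv; apply: vertex_ext hv => y; split; by move/e.
Qed.

Lemma face_vertices T (F : vec -> Prop) a (be : R) :
  (forall x, PT T x -> dot a x <= be) -> (forall x, F x <-> PT T x /\ dot a x = be) ->
  forall x, F x -> wc (vertex F) 1 x.
Proof.
move=> hle hF x /hF [Px ex].
have h := krein_milman Px.
have hv : forall y, vertex (PT T) y -> dot a y <= be by move=> y [Py _]; apply: hle.
have h2 := wc_dot_eq hv h (esym (etrans (mul1r be) (esym ex))).
apply: wc_mono h2 => v [[Pv hv'] ev]; split; first by apply/hF.
move=> y z t /hF [Py _] /hF [Pz _]; exact: hv'.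
Qed.
End KM.


Section Finite.
Variables (R : realType) (n : nat) (Rt : seq 'rV[R]_n) (alpha : 'I_n -> 'rV[R]_n).
Hypothesis HR : root_system Rt.
Hypothesis HS : simple_system Rt alpha.
Notation vec := 'rV[R]_n.
Implicit Types (x y z a : vec).
Notation wa := (wact alpha).

Lemma orbit_finite x : exists L : seq vec, forall s, wa s x \in L.
Proof.
case: HR => _ hfull _ _ _.
set m := size Rt.
set M := \matrix_(i < m) nth 0 Rt i.
have : (x <= M)%MS by apply: submx_full.
case/submxP => D eD.
have ex : x = \sum_(i < m) D 0 i *: nth 0 Rt i.
  by rewrite eD mulmx_sum_row; apply: eq_bigr => i _; rewrite rowK.
exists [seq \sum_(i < m) D 0 i *: nth 0 Rt (g i) | g : {ffun 'I_m -> 'I_m} <- enum {ffun 'I_m -> 'I_m}].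
move=> s.
have hix : forall i : 'I_m, (index (wa s (nth 0%R Rt i)) Rt < m)%N.
  move=> i; rewrite index_mem; apply: (wact_Rt HR HS); exact: mem_nth.
apply/mapP; exists [ffun i => Ordinal (hix i)]; first by rewrite mem_enum.
rewrite {1}ex (wact_sum alpha); apply: eq_bigr => i _.
rewrite (wactZ alpha) ffunE /= nth_index //.
apply: (wact_Rt HR HS); exact: mem_nth.
Qed.

Lemma exists_list (Q : vec -> Prop) (U : seq vec) :
  (forall y, Q y -> y \in U) -> exists T : seq vec, forall y, Q y <-> y \in T.
Proof.
elim: U Q => [|u U IH] Q hQ.
  by exists [::] => y; split => // /hQ.
have hQ' : forall y, Q y /\ y <> u -> y \in U.
  by move=> y [/hQ]; rewrite inE => /orP [/eqP ->//|].
have [T hT] := IH (fun y => Q y /\ y <> u) hQ'.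
  case: (classic (Q u)) => hu.
    exists (u :: T) => y; rewrite inE; split.
      move=> qy; case: (eqVneq y u) => //= yu; apply/hT; split => //; exact/eqP.
    by case/orP => [/eqP ->//|/hT []].
  exists T => y; split.
    move=> qy; apply/hT; split => // e; by apply: hu; rewrite -e.
  by move/hT => [].
Qed.

Lemma list_max (f : vec -> R) (L : seq vec) y0 : y0 \in L ->
  exists2 z, z \in L & forall y, y \in L -> f y <= f z.
Proof.
elim: L y0 => // u L IH y0 _.
case: L IH => [|u' L'] IH.
  by exists u; [exact: mem_head | move=> y; rewrite inE => /eqP ->].
have [z zL hz] := IH u' (mem_head _ _).
case: (lerP (f z) (f u)) => h.
  exists u; first exact: mem_head.
  by move=> y; rewrite inE => /orP [/eqP ->//|/hz /le_trans]; apply.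
exists z; first by rewrite inE zL orbT.
by move=> y; rewrite inE => /orP [/eqP ->|/hz//]; apply: ltW.
Qed.

Lemma orbit_list (Lam : seq vec) :
  exists T : seq vec, forall y, Worbit alpha Lam y <-> y \in T.
Proof.
have [U hU] : exists U : seq vec, forall l s, l \in Lam -> wa s l \in U.
  elim: Lam => [|l Lam [U hU]]; first by exists [::].
  have [L hL] := orbit_finite l.
  exists (L ++ U) => l' s; rewrite inE mem_cat => /orP [/eqP ->|/hU ->].
    by rewrite hL.
  by rewrite orbT.
apply: (exists_list (U := U)) => y [s [l [lL ->]]]; exact: hU.
Qed.

Lemma rho_exists : exists rho : vec, forall i, dot rho (alpha i) = 1.
Proof.
have hu : (Amx alpha)^T \in unitmx by rewrite unitmx_tr (Amx_unit HS).
exists (const_mx 1 *m invmx (Amx alpha)^T) => i.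
have := congr1 (fun M : 'rV[R]_n => M 0 i) (mulmxKV hu (const_mx 1)).
rewrite [X in _ = X]mxE => h; apply: (eq_trans _ h).
rewrite dotE mxE; apply: eq_bigr => j _.
by rewrite !mxE.
Qed.

End Finite.


Section Gen.
Variables (R : realType) (n : nat).
Notation vec := 'rV[R]_n.

Lemma sum_const_seq (T : Type) (s : seq T) (c : R) : \sum_(v <- s) c = c *+ size s.
Proof. by elim: s => [|x s IH]; rewrite ?big_nil // big_cons IH mulrS. Qed.

Lemma vertex_lin (Q : vec -> Prop) (f g : vec -> vec) v :
  (forall x y, g (x + y) = g x + g y) -> (forall c x, g (c *: x) = c *: g x) ->
  (forall x, f (g x) = x) -> (forall x, g (f x) = x) ->
  (forall x, Q x -> Q (f x)) -> (forall x, Q x -> Q (g x)) ->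
  vertex Q v -> vertex Q (f v).
Proof.
move=> gD gZ fg gf Qf Qg [Qv hv]; split; first exact: Qf.
move=> x y t Qx Qy t0 t1 e.
have e' : v = t *: g x + (1 - t) *: g y by rewrite -gZ -gZ -gD -e gf.
have [h1 h2] := hv _ _ t (Qg _ Qx) (Qg _ Qy) t0 t1 e'.
by split; [rewrite -h1 fg | rewrite -h2 fg].
Qed.
End Gen.

Section Main.
Variables (R : realType) (n : nat) (Rt : seq 'rV[R]_n) (alpha : 'I_n -> 'rV[R]_n)
  (Lam : seq 'rV[R]_n) (K : {set 'I_n}) (F : 'rV[R]_n -> Prop) (b : 'rV[R]_n).
Notation vec := 'rV[R]_n.
Notation wa := (wact alpha).
Notation P := (Wpolytope alpha Lam).
Hypotheses (HR : root_system Rt) (HS : simple_system Rt alpha)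
  (HL : forall l, l \in Lam -> inC alpha setT l) (Hfd : full_dim P).
Variables (a : vec) (be : R) (T : seq vec) (vs : seq vec) (x0 : vec).
Hypotheses (a0 : a != 0) (hle : forall x, P x -> dot a x <= be)
  (hF : forall x, F x <-> P x /\ dot a x = be) (Fx0 : F x0)
  (hfl : forall (c : vec) (d : R), (forall x, F x -> dot c x = d) ->
          exists t : R, c = t *: a /\ d = t * be)
  (hT : forall y, Worbit alpha Lam y <-> y \in T)
  (vsu : uniq vs) (hvs : forall v, v \in vs <-> vertex F v)
  (eb : b = (size vs)%:R^-1 *: \sum_(v <- vs) v)
  (Hb : inC alpha K b).

Lemma P_PT x : P x <-> PT T x.
Proof.
rewrite /Wpolytope conv_wc /PT; split; apply: wc_mono => y; by move/hT.
Qed.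

Lemma P_wc x : P x <-> wc (Worbit alpha Lam) 1 x.
Proof. exact: conv_wc. Qed.

Lemma P_convex : convexP P.
Proof.
move=> mu r hw m0; apply/P_wc; apply: convex_wc m0.
by apply: wc_mono hw => y /P_wc.
Qed.

Lemma P_wact s x : P x -> P (wa s x).
Proof.
move/P_wc => h; apply/P_wc.
apply: (wc_map (wactD alpha s) (wactZ alpha s) _ h).
move=> y [s' [l [lL ->]]]; exists (s ++ s'), l; split => //; by rewrite wact_cat.
Qed.

Lemma P_wact_iff s x : P (wa s x) <-> P x.
Proof.
split; last exact: P_wact.
by move/(P_wact (rev s)); rewrite (wact_revK HR HS).
Qed.

Lemma F_P x : F x -> P x.
Proof. by case/hF. Qed.

Lemma F_vertices x : F x -> wc (vertex F) 1 x.
Proof.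
apply: (face_vertices (T := T) (a := a) (be := be)).
  by move=> y /P_PT; apply: hle.
by move=> y; rewrite hF P_PT.
Qed.

Lemma vs_pos : (0 < size vs)%N.
Proof.
have [v hv] := wc_exists (F_vertices Fx0) ltr01.
by move/hvs: hv; case: vs.
Qed.

Lemma wc_vs : wc (fun y => y \in vs) 1 b.
Proof.
exists [seq ((size vs)%:R^-1, v) | v <- vs]; split.
- by apply/allP => q /mapP [v _ ->] /=; rewrite invr_ge0 ler0n.
- rewrite big_map /= sum_const_seq -(mulr_natr ((size vs)%:R^-1)) mulVf //.
  by rewrite pnatr_eq0 -lt0n vs_pos.
- by move=> q /mapP [v vv ->].
- by rewrite big_map eb scaler_sumr.
Qed.

Lemma b_F : F b.
Proof.
have h1 : forall y, y \in vs -> F y by move=> y /hvs [].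
apply/hF; split.
  have := P_convex (wc_mono (fun y hy => F_P (h1 y hy)) wc_vs) ltr01.
  by rewrite invr1 scale1r.
have := wc_dot_const (g := a) (be := be) (fun y hy => proj2 (proj1 (hF y) (h1 y hy))) wc_vs.
by rewrite mul1r.
Qed.

Lemma BRI (g : vec) (ga : R) : (forall x, P x -> dot g x <= ga) -> dot g b = ga ->
  forall x, F x -> dot g x = ga.
Proof.
move=> hg hb.
have hv : forall v, v \in vs -> dot g v <= ga by move=> v /hvs [/F_P/hg].
have hsum : \sum_(v <- vs) (ga - dot g v) = 0.
  rewrite sumrB sum_const_seq -dot_sumr.
  have sz : (size vs)%:R != 0 :> R by rewrite pnatr_eq0 -lt0n vs_pos.
  have : dot g b = (size vs)%:R^-1 * dot g (\sum_(v <- vs) v) by rewrite eb dotZr.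
  rewrite hb => e.
  have -> : dot g (\sum_(v <- vs) v) = (size vs)%:R * ga.
    by rewrite e mulrA mulfV // mul1r.
  by rewrite -(mulr_natl ga) subrr.
have hall : forall v, v \in vs -> dot g v = ga.
  move: hsum => /eqP; rewrite big_seq psumr_eq0; last by move=> v /hv; rewrite subr_ge0.
  move=> /allP h v vv; have := h v vv; rewrite /= vv /= subr_eq0 => /eqP; done.
move=> x Fx.
have hA : forall y, vertex F y -> dot g y = ga by move=> y /hvs; apply: hall.
by have := wc_dot_const hA (F_vertices Fx); rewrite mul1r.
Qed.

Lemma IMG w y : img (wa w) F y <-> P y /\ dot (wa w a) y = be.
Proof.
split.
- move=> [x [Fx <-]]; have [Px ex] := proj1 (hF x) Fx.
  by split; [exact: P_wact | rewrite (wact_dot HR HS)].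
- move=> [Py ey]; exists (wa (rev w) y); split; last exact: wact_Krev HR HS w y.
  apply/hF; split; first by apply/(P_wact_iff w); rewrite (wact_Krev HR HS).
  by rewrite -ey -(wact_dot HR HS w) (wact_Krev HR HS).
Qed.

Lemma LE w y : P y -> dot (wa w a) y <= be.
Proof. by move=> Py; rewrite (wact_adj HR HS); apply: hle; apply: P_wact. Qed.

Lemma eab : dot a b = be.
Proof. exact: (proj2 (proj1 (hF b) b_F)). Qed.

Lemma FIX w : dot (wa w a) b = be -> wa w a = a.
Proof.
move=> hb.
have h := BRI (LE w) hb.
have [t [et ebt]] := hfl h.
have hn : dot a a != 0 by rewrite gt_eqF // dot_gt0.
have t2 : t * t = 1.
  have := wact_dot HR HS w a a; rewrite et dotZl dotZr mulrA => e.
  by apply: (mulIf hn); rewrite e mul1r.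
have e : (t - 1) * (t + 1) = 0 by rewrite mulrBl mulrDr t2 mul1r mulr1; ring.
move/eqP: e; rewrite mulf_eq0 subr_eq0 addr_eq0 => /orP [/eqP t1|/eqP tm].
  by rewrite et t1 scale1r.
exfalso; move/negP: a0; apply; apply/eqP.
have be0 : be = 0 by move: ebt; rewrite tm; lra.
apply: (Hfd (d := 0)) => x Px.
have h1 := hle Px; have h2 := LE w Px.
move: h2; rewrite et tm dotZl => h2.
apply/eqP; rewrite eq_le; apply/andP; split; lra.
Qed.

Lemma STABF w : wa w b = b -> forall y, img (wa w) F y <-> F y.
Proof.
move=> hb.
have e : wa w a = a by apply: FIX; rewrite -{1}hb (wact_dot HR HS) eab.
move=> y; rewrite IMG e; split; by move/hF.
Qed.

Lemma img_ext (f g : vec -> vec) y : (forall x, f x = g x) ->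
  img f F y <-> img g F y.
Proof.
by move=> e; split; move=> [x [Fx ex]]; exists x; split => //; rewrite -ex e.
Qed.

Lemma part1 (w : vec -> vec) :
  (inWK alpha K w /\ stabilizes w F) <->
  inWK alpha [set k in K | refl (alpha k) b == b] w.
Proof.
split.
- move=> [[s [sK ew]] hst].
  have hst' : forall y, img (wa s) F y <-> F y.
    by move=> y; rewrite -(hst y); apply: img_ext => x; rewrite ew.
  have vmap : forall v, vertex F v -> vertex F (wa s v).
    move=> v; apply: (vertex_lin (f := wa s) (g := wa (rev s))).
    - exact: wactD.
    - exact: wactZ.
    - by move=> x; rewrite (wact_Krev HR HS).
    - by move=> x; rewrite (wact_revK HR HS).
    - by move=> x Fx; apply/hst'; exists x.
    - by move=> x /hst' [x' [Fx' <-]]; rewrite (wact_revK HR HS).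
  have hsub : {subset map (wa s) vs <= vs}.
    by move=> y /mapP [v vv ->]; apply/hvs; apply: vmap; apply/hvs.
  have hu : uniq (map (wa s) vs).
    by rewrite map_inj_uniq // => x y; apply: (wact_inj HR HS).
  have hsz : (size vs <= size (map (wa s) vs))%N by rewrite size_map.
  have [_ hi] := uniq_min_size hu hsub hsz.
  have hp : perm_eq (map (wa s) vs) vs by apply: uniq_perm.
  have fb : wa s b = b.
    rewrite eb (wactZ alpha) (wact_sum alpha); congr (_ *: _).
    by symmetry; rewrite -(perm_big _ hp) big_map.
  have [w' [h1 h2]] := stab_lemma HR HS (K := K) Hb sK fb.
  by exists w'; split => // x; rewrite ew h2.
- move=> [s [sK' ew]].
  have sK : all (fun i => i \in K) s.
    by apply/allP => i /(allP sK'); rewrite inE => /andP [].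
  have fb : wa s b = b.
    elim: s sK' {ew sK} => //= i s IH /andP [hi hs]; rewrite IH //.
    by move: hi; rewrite inE => /andP [_ /eqP].
  split; first by exists s.
  by move=> y; rewrite -(STABF fb y); apply: img_ext.
Qed.

Lemma aCK k : k \in K -> 0 <= dot a (alpha k).
Proof.
move=> kK; rewrite leNgt; apply/negP => hk.
have an := alpha_neq0 HR HS k; have pa := dot_gt0 an.
set c := 2 * dot a (alpha k) / dot (alpha k) (alpha k).
have cn : c < 0 by rewrite /c ltr_pdivrMr // mul0r; lra.
have hbk := Hb kK.
have e1 : dot (wa [:: k] a) b = be.
  have Pb := F_P b_F; apply/eqP; rewrite eq_le LE //=.
  rewrite /refl -/c dotBl dotZl eab (dotC (alpha k) b).
  have : 0 <= - c * dot b (alpha k) by apply: mulr_ge0 => //; lra.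
  lra.
have := FIX e1; rewrite /= => /eqP; rewrite refl_fix // => /eqP h0.
by move: hk; rewrite h0 ltxx.
Qed.

Lemma part2 : Wnondegenerate alpha P -> forall s : vec -> vec, inWK alpha K s ->
  (forall y, (F y /\ img s F y) <-> F y) \/ (forall y, ~ (F y /\ img s F y)).
Proof.
move=> Hnd s [sw [swK esw]].
have img_eq : forall y, img s F y <-> img (wa sw) F y by move=> y; apply: img_ext.
case: (classic (exists x, F x /\ img s F x)) => [[x [Fx hx]]|hno];
  last by right => y hy; apply: hno; exists y.
left.
move/img_eq/IMG: hx => [Px ex].
set sa := wa sw a.
have hg : forall y, vertex (PT T) y -> dot (a + sa) y <= be + be.
  move=> y [/P_PT Py _]; rewrite dotDl; apply: lerD; [exact: hle | exact: LE].
have hx1 := krein_milman (proj1 (P_PT x) Px).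
have ex2 : dot (a + sa) x = 1 * (be + be).
  by rewrite mul1r dotDl ex (proj2 (proj1 (hF x) Fx)).
have hx2 := wc_dot_eq hg hx1 ex2.
have [v [vv ev]] := wc_exists hx2 ltr01.
have Pv : P v by case: vv => /P_PT.
have vP : vertex P v by apply: vertex_ext vv => y; rewrite P_PT.
have av1 := hle Pv; have sav1 := LE sw Pv.
move: ev; rewrite dotDl => ev.
have av : dot a v = be by lra.
have sav : dot sa v = be by lra.
(* the dominant conjugate z of v *)
have [rho hrho] := rho_exists HS.
have [L hL] := orbit_finite HR HS v.
have hQ : forall y, (exists t, Kword K t /\ y = wa t v) -> y \in L.
  by move=> y [t [_ ->]]; exact: hL.
have [Tv hTv] := exists_list hQ.
have vTv : v \in Tv by apply/hTv; exists [::].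
have [z zT hz] := list_max (fun y => dot rho y) vTv.
have [t [tK ez]] := proj2 (hTv z) zT.
have zmax : forall t', Kword K t' -> dot rho (wa t' v) <= dot rho z.
  by move=> t' ht'; apply: hz; apply/hTv; exists t'.
have Pz : P z by rewrite ez; apply: P_wact.
have zvert : forall q y, vertex P y -> vertex P (wa q y).
  move=> q y; apply: (vertex_lin (f := wa q) (g := wa (rev q))).
  - exact: wactD.
  - exact: wactZ.
  - by move=> ?; rewrite (wact_Krev HR HS).
  - by move=> ?; rewrite (wact_revK HR HS).
  - by move=> y' Py'; apply: P_wact.
  - by move=> y' Py'; apply: P_wact.
have zV : vertex P z by rewrite ez; apply: zvert.
have zreg : forall k, dot z (alpha k) != 0.
  move=> k.
  have zT' : z \in T.
    apply: (vertex_in (A := fun y => y \in T)); first by apply: vertex_ext zV => y; rewrite P_PT.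
    exact/P_PT.
  have [q [l [lL ezl]]] := proj2 (hT z) zT'.
  have lV : vertex P l.
    by have := zvert (rev q) z zV; rewrite ezl (wact_revK HR HS).
  have lpos : forall i, i \in [set: 'I_n] -> 0 < dot l (alpha i).
    move=> i _; rewrite lt_def (HL lL) ?inE // andbT.
    apply/negP => /eqP h0; apply: (Hnd l lV); split; first exact: HL.
    by exists i.
  have gR : wa (rev q) (alpha k) \in Rt by apply: (wact_Rt HR HS); exact: alpha_Rt.
  have g0 := root_neq0 HR gR.
  rewrite ezl (wact_adj HR HS).
  case: (root_sign HS gR) => hs.
    by rewrite gt_eqF //; apply: (dot_K_gt0 HS lpos) => // i; rewrite inE.
  have pn : pos alpha (- wa (rev q) (alpha k)).
    by move=> i; rewrite (coordN alpha) oppr_ge0.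
  have pn0 : - wa (rev q) (alpha k) != 0 by rewrite oppr_eq0.
  have hh : 0 < dot l (- wa (rev q) (alpha k)).
    by apply: (dot_K_gt0 HS lpos pn pn0) => i; rewrite inE.
  by rewrite lt_eqF // -oppr_gt0 -dotNr.
have zdom : forall k, k \in K -> 0 <= dot z (alpha k).
  move=> k kK; rewrite leNgt; apply/negP => hk.
  have an := alpha_neq0 HR HS k; have pa := dot_gt0 an.
  have hK' : Kword K (k :: t) by rewrite /Kword /= kK.
  have := zmax _ hK'.
  rewrite /= -ez /refl dotBr dotZr hrho mulr1.
  set c := 2 * dot z (alpha k) / dot (alpha k) (alpha k).
  have cn : c < 0 by rewrite /c ltr_pdivrMr // mul0r; lra.
  lra.
have zK : forall k, k \in K -> 0 < dot z (alpha k).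
  by move=> k kK; rewrite lt_def zreg zdom.
have aK := aCK.
have hvz : wa (rev t) z = v by rewrite ez (wact_revK HR HS).
have Kt : Kword K (rev t) by rewrite Kword_rev.
have [s1 s2] := sup_lemma HR HS aK zK Kt.
have az := hle Pz.
have e1 : dot a (z - wa (rev t) z) = 0.
  apply/eqP; rewrite eq_le s1 andbT hvz dotBr av; lra.
have fa1 := s2 e1.
have Kc : Kword K (rev sw ++ rev t).
  by rewrite /Kword all_cat !all_rev swK; exact: tK.
have [s3 s4] := sup_lemma HR HS aK zK Kc.
have e2 : dot a (z - wa (rev sw ++ rev t) z) = 0.
  apply/eqP; rewrite eq_le s3 andbT wact_cat hvz dotBr -(wact_adj HR HS) -/sa sav; lra.
have fa2 := s4 e2.
have hsa : sa = a.
  move: fa2; rewrite wact_cat fa1 => h.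
  by rewrite /sa -{1}h (wact_Krev HR HS).
move=> y; split; first by case.
move=> Fy; split => //; apply/img_eq/IMG; split; first exact: F_P.
by rewrite -/sa hsa (proj2 (proj1 (hF y) Fy)).
Qed.

End Main.

Unset Implicit Arguments.
Set Strict Implicit.

Theorem lemma2p5 (R : realType) (n : nat) (Rt : seq 'rV[R]_n)
    (alpha : 'I_n -> 'rV[R]_n) (Lam : seq 'rV[R]_n) (K : {set 'I_n})
    (F : 'rV[R]_n -> Prop) (b : 'rV[R]_n) :
  root_system Rt -> simple_system Rt alpha ->
  (forall l, l \in Lam -> inC alpha setT l) ->
  full_dim (Wpolytope alpha Lam) ->
  facet (Wpolytope alpha Lam) F ->
  is_bary F b -> inC alpha K b ->
  (forall w : 'rV[R]_n -> 'rV[R]_n,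
      (inWK alpha K w /\ stabilizes w F) <->
      inWK alpha [set k in K | refl (alpha k) b == b] w)
  /\
  (Wnondegenerate alpha (Wpolytope alpha Lam) ->
   forall s : 'rV[R]_n -> 'rV[R]_n, inWK alpha K s ->
     (forall y, (F y /\ img s F y) <-> F y) \/
     (forall y, ~ (F y /\ img s F y))).
Proof.
move=> HR HS HL Hfd [a [be [a0 hle hF [x0 Fx0] hfl]]] [vs [vsu hvs eb]] Hb.
have [T hT] := orbit_list HR HS Lam.
split.
- move=> w; exact: (part1 HR HS Hfd a0 hle hF Fx0 hfl hT vsu hvs eb Hb w).
- move=> Hnd s hs; exact: (part2 HR HS HL Hfd a0 hle hF Fx0 hfl hT hvs eb Hb Hnd hs).
Qed.
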